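(* Consider an infinite execution $\gamma_0\gamma_1\ldots$ of the unison dynamics augmented with the infimum registers (as in the context), with $\gamma_0$ satisfying $WU_0$, in which every process increments its clock infinitely often; let $\bot_0$, $\widetilde{p^t.r}$ and $t_{p,k}$ be as in the context. Let $U$ be an integer with $U\delta\ge\bot_0+D+1$, and let $k\in\{1,\dots,\varrho\}$. Then for every $p\in V$, in the configuration $\gamma_{t_{p,U\delta+k}}$, $p.v_1=\bigoplus\{q.v_0: q\in V(p,k-1)\}$ and $p.v_2=\bigoplus\{q.v_0: q\in V(p,k)\}$.
   Context: Let $G=(V,E)$ be a finite connected undirected graph, $|V|=n\ge 2$, $\mathcal N_p$ the set of neighbors of $p$, $d(p,q)$ the hop distance, $D$ the diameter, and $V(p,r)=\{q\in V: d(p,q)\le r\}$. Fix integers $\varrho\ge1$, $\delta=\varrho+1$, and $M\ge3$ a multiple of $\delta$; for an integer $a$, $\bar a\in\{0,\dots,M-1\}$ is its residue modulo $M$. Each process $p$ holds a clock $p.r\in\{0,\dots,M-1\}$; $p^t.r$ is its value in $\gamma_t$. Integers $a,b$ are locally comparable if $\min(\overline{a-b},\overline{b-a})\le1$, and then $b\ominus a=\overline{b-a}$ if $\overline{b-a}\le1$, else $-\overline{a-b}$. $WU$: for every edge $\{p,q\}$, $p.r,q.r$ are locally comparable. The delay of a path $p_0\ldots p_k$ is $\sum_{i<k}(p_{i+1}.r\ominus p_i.r)$. $WU_0$: $WU$ holds and all paths between any $p,q$ have the same delay $\delta_{(p,q)}$ ($\delta^t_{(p,q)}$ in $\gamma_t$).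 Let $\oplus$ be an associative, commutative, idempotent binary operation on a set $\mathbb S$; $\bigoplus$ of a finite nonempty set is the $\oplus$ of its elements. Each process $p$ has registers $p.v_0,p.v_1,p.v_2\in\mathbb S$, where $p.v_0$ is never modified. Dynamics: $p$ is enabled iff for every $q\in\mathcal N_p$, $q.r=p.r$ or $q.r=\overline{p.r+1}$. In a transition $\gamma_t\to\gamma_{t+1}$ a nonempty set of processes enabled in $\gamma_t$ is chosen (by an arbitrary daemon); each chosen $p$, reading the values of $\gamma_t$, does: if $p.r\equiv\varrho \pmod\delta$ then $p.v_1:=p.v_0$, $p.v_2:=p.v_0$; otherwise $p.v_1:=p.v_2$ and $p.v_2:=p.v_0\oplus\bigoplus\{q.v_{\omega(q)}:q\in\mathcal N_p\}$, where $\omega(q)=2$ if $q.r=p.r$ and $\omega(q)=1$ if $q.r=\overline{p.r+1}$; then $p.r:=\overline{p.r+1}$. Other processes are unchanged. Lifting: choose $p_0$ with $\delta^0_{(p_0,q)}\ge0$ for all $q$, let $\bot_0=p_0^0.r$, set $\widetilde{p^0.r}=\bot_0+\delta^0_{(p_0,p)}$, and $\widetilde{p^{t+1}.r}=\widetilde{p^t.r}+1$ if $p$ increments in $\gamma_t\to\gamma_{t+1}$, else $\widetilde{p^{t+1}.r}=\widetilde{p^t.r}$. For an integer $k$, $t_{p,k}$ is the smallest $t$ with $\widetilde{p^t.r}=k$. *)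

(* Defs.v *)
From mathcomp Require Import all_boot all_order all_algebra.
Set Implicit Arguments. Unset Strict Implicit. Unset Printing Implicit Defensive.
Import GRing.Theory Num.Theory.

Section Defs.
Variable T : finType.

Fixpoint within (e : rel T) (k : nat) (p q : T) : bool :=
  match k with
  | 0 => p == q
  | k'.+1 => within e k' p q || [exists x, within e k' p x && e x q]
  end.

(* hop distance: least k with a walk of length <= k (graph assumed connected,
   so k < #|T| always exists) *)
Definition dist (e : rel T) (p q : T) : nat :=
  find (fun k => within e k p q) (iota 0 #|T|).

Definition diam (e : rel T) : nat := \max_(p : T) \max_(q : T) dist e p q.

Definition ball (e : rel T) (p : T) (r : nat) : {set T} :=
  [set q | dist e p q <= r].

Definition resM (M : nat) (z : int) : nat := absz (z %% (Posz M))%Z.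

Definition loc_comp (M : nat) (a b : int) : bool :=
  minn (resM M (a - b)%R) (resM M (b - a)%R) <= 1.

Definition ominus (M : nat) (b a : int) : int :=
  if resM M (b - a)%R <= 1 then Posz (resM M (b - a)%R) else (- Posz (resM M (a - b)%R))%R.

Fixpoint delay (M : nat) (r : T -> nat) (x : T) (s : seq T) : int :=
  match s with
  | [::] => 0%R
  | y :: s' => (ominus M (Posz (r y)) (Posz (r x)) + delay M r y s')%R
  end.

Definition WU (M : nat) (e : rel T) (r : T -> nat) : Prop :=
  forall p q, e p q -> loc_comp M (Posz (r p)) (Posz (r q)).

Variable S : Type.

Record config := Config { cr : T -> nat; cv1 : T -> S; cv2 : T -> S }.

Definition bigS (op : S -> S -> S) (x : S) (s : seq S) : S := foldr op x s.

(* (+){ f q : q in A } for a nonempty set A (d is an irrelevant default) *)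
Definition bigset (op : S -> S -> S) (f : T -> S) (A : {set T}) (d : S) : S :=
  match enum A with
  | [::] => d
  | a :: s => bigS op (f a) (map f s)
  end.

Definition enabled (M : nat) (e : rel T) (c : config) (p : T) : Prop :=
  forall q, e p q -> cr c q = cr c p \/ cr c q = (cr c p).+1 %% M.

Definition step (M rho : nat) (e : rel T) (op : S -> S -> S) (v0 : T -> S)
  (c : config) (A : {set T}) : config :=
  Config
    (fun p => if p \in A then (cr c p).+1 %% M else cr c p)
    (fun p => if p \in A then
                (if cr c p %% rho.+1 == rho then v0 p else cv2 c p)
              else cv1 c p)
    (fun p => if p \in A then
                (if cr c p %% rho.+1 == rho then v0 p else
                   bigS op (v0 p)
                     [seq (if cr c q == cr c p then cv2 c q else cv1 c q)
                     | q <- enum [set q | e p q]])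
              else cv2 c p).

(* lifted clock: base p = bot0 + delta^0_(p0,p) *)
Fixpoint clift (sel : nat -> {set T}) (base : T -> int) (p : T) (t : nat) : int :=
  match t with
  | 0 => base p
  | t'.+1 => (clift sel base p t' + Posz (p \in sel t'))%R
  end.

End Defs.

(* Main.v *)
Require Import Defs.
From mathcomp Require Import all_boot all_order all_algebra.
Import GRing.Theory Num.Theory.

Module Helpers.
Import Order.TTheory.
Set Implicit Arguments. Unset Strict Implicit. Unset Printing Implicit Defensive.

Section Graph.
Variables (T : finType) (e : rel T).
Hypothesis e_conn : forall p q : T, connect e p q.

Lemma withinS k p q : within e k p q -> within e k.+1 p q.
Proof. by move=> h /=; rewrite h. Qed.

Lemma within_mono k k' p q : k <= k' -> within e k p q -> within e k' p q.
Proof.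
move=> /subnK <-; elim: (k' - k) => [|m IH] // h.
by rewrite addSn; apply: withinS; apply: IH.
Qed.

Lemma withinP k p q :
  within e k p q <-> exists s, [/\ path e p s, last p s = q & size s <= k].
Proof.
split.
- elim: k q => [|k IH] q /=.
  + by move/eqP=> <-; exists [::].
  + case/orP=> [/IH [s [h1 h2 h3]] | /existsP [x /andP [/IH [s [h1 h2 h3]] hx]]].
    * by exists s; split=> //; apply: leqW.
    * exists (rcons s q); rewrite rcons_path last_rcons size_rcons h2 h1 hx; split=> //.
- case=> s []; elim/last_ind: s k q => [|s y IH] k q /=.
  + move=> _ <- _; apply: (@within_mono 0) => //=.
  + rewrite rcons_path last_rcons size_rcons => /andP [hs hy] <-.
    case: k => // k hk /=; apply/orP; right; apply/existsP; exists (last p s).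
    by rewrite hy andbT; apply: (IH k).
Qed.

Lemma within_conn p q : within e #|T|.-1 p q.
Proof.
case/connectP: (e_conn p q) => s hp ->.
case: (shortenP hp) => s' hp' hu _.
apply/withinP; exists s'; split=> //.
have hc := max_card (mem (p :: s')); move/card_uniqP: hu => hu.
rewrite hu /= in hc; by case: #|T| hc.
Qed.

Lemma dist_leP p q r : (dist e p q <= r) = within e r p q.
Proof.
rewrite /dist.
have hT : 0 < #|T| by apply/card_gt0P; exists p.
have hhas : has (fun k => within e k p q) (iota 0 #|T|).
  apply/hasP; exists #|T|.-1.
    by rewrite mem_iota add0n /=; case: #|T| hT.
  exact: within_conn.
have hlt := hhas; rewrite has_find size_iota in hlt.
have hf := nth_find 0 hhas; rewrite nth_iota // add0n in hf.
apply/idP/idP => h.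
- exact: within_mono h hf.
- rewrite leqNgt; apply/negP => hr.
  have := before_find 0 hr; rewrite nth_iota ?add0n ?h //.
  exact: ltn_trans hr hlt.
Qed.

Lemma in_ball p r q : (q \in ball e p r) = within e r p q.
Proof. by rewrite inE dist_leP. Qed.

Lemma ball0 p : ball e p 0 = [set p].
Proof. by apply/setP => q; rewrite in_ball !inE /= eq_sym. Qed.

Lemma ballS p r :
  ball e p r.+1 = p |: \bigcup_(x in [set x | e p x]) ball e x r.
Proof.
apply/setP => q; rewrite in_ball !inE; apply/idP/idP.
- case/withinP => [[|x s] [hp hl hs]].
  + by rewrite -hl /= eqxx.
  + move: hp => /= /andP [hx hs']; apply/orP; right.
    apply/bigcupP; exists x; first by rewrite inE.
    by rewrite in_ball; apply/withinP; exists s.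
- case/orP => [/eqP -> | /bigcupP [x]].
  + by apply: (@within_mono 0) => //=.
  + rewrite inE in_ball => hx /withinP [s [hp hl hs]].
    by apply/withinP; exists (x :: s); rewrite /= hx hp.
Qed.

Lemma in_ball_self p r : p \in ball e p r.
Proof. by rewrite in_ball; apply: (@within_mono 0) => //=. Qed.

Lemma dist_le_diam p q : dist e p q <= diam e.
Proof.
rewrite /diam.
have h1 := @leq_bigmax T (fun p => \max_(q : T) dist e p q) p.
have h2 := @leq_bigmax T (fun q => dist e p q) q.
exact: leq_trans h2 h1.
Qed.

End Graph.

Section ACI.
Variables (T : finType) (S : Type) (op : S -> S -> S).
Hypotheses (opA : associative op) (opC : commutative op) (opI : idempotent_op op).
Local Notation oop := (oAC opA opC).

Lemma oopI : idempotent_op oop.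
Proof. by case=> // x; rewrite oACE opI. Qed.

Lemma foldr_oop (I : Type) (f : I -> S) x s :
  Some (foldr op x (map f s)) = oop (Some x) (\big[oop/None]_(q <- s) Some (f q)).
Proof.
elim: s => [|y s IH]; first by rewrite big_nil.
by rewrite big_cons /= -oACE IH; exact: Monoid.mulmCA.
Qed.

Definition Ev (v0 : T -> S) (A : {set T}) := \big[oop/None]_(q in A) Some (v0 q).

Lemma bigsetE v0 A d : A != set0 -> Some (bigset op v0 A d) = Ev v0 A.
Proof.
move=> hA; rewrite /bigset /Ev -big_enum /=.
case E: (enum A) => [|a s].
  have h0 : #|A| = 0 by rewrite cardE E.
  by move/cards0_eq: h0 => h0; rewrite h0 eqxx in hA.
by rewrite big_cons /bigS foldr_oop.
Qed.

Lemma EvU v0 : {morph Ev v0 : x y / x :|: y >-> oop x y}.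
Proof. move=> A B; exact: big_setU oopI. Qed.

Lemma Ev0 v0 : Ev v0 set0 = None.
Proof. by rewrite /Ev big_set0. Qed.

Lemma update (e : rel T) (e_conn : forall p q, connect e p q) (v0 : T -> S) p r (g : T -> S) :
  (forall x, e p x -> g x = bigset op v0 (ball e x r) (v0 x)) ->
  bigS op (v0 p) [seq g q | q <- enum [set q | e p q]] = bigset op v0 (ball e p r.+1) (v0 p).
Proof.
move=> hg; apply: Some_inj.
have ne : forall x r', ball e x r' != set0.
  by move=> x r'; apply/set0Pn; exists x; apply: in_ball_self.
rewrite bigsetE // ballS // EvU /bigS foldr_oop big_enum /=.
congr (oop _ _); first by rewrite /Ev big_set1.
rewrite (big_morph (Ev v0) (EvU v0) (Ev0 v0)).
apply: eq_bigr => x; rewrite inE => hx.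
by rewrite hg // bigsetE.
Qed.

End ACI.

Lemma Mnz (M : nat) : 0 < M -> (M%:Z != 0)%R.
Proof. by case: M. Qed.

Lemma ominus_mod (M : nat) (a b : int) : 0 < M ->
  ((ominus M b a) %% M)%Z = ((b - a) %% M)%Z.
Proof.
move=> /Mnz hM; rewrite /ominus /resM; case: ifP => _.
- by rewrite gez0_abs ?modz_ge0 // modz_mod.
- by rewrite gez0_abs ?modz_ge0 // modzNm opprB.
Qed.

Lemma ominus_le1 (M : nat) (a b : int) : (ominus M b a <= 1)%R.
Proof.
rewrite /ominus; case: ifP => h; first by rewrite lez_nat.
have h0 : (- (resM M (a - b))%:Z <= 0)%R by rewrite oppr_le0.
exact: Order.le_trans h0 _.
Qed.

Lemma delay_mod (T : finType) (M : nat) (r : T -> nat) x s : 0 < M ->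
  ((delay M r x s) %% M)%Z = (((r (last x s))%:Z - (r x)%:Z) %% M)%Z.
Proof.
move=> hM; elim: s x => [|y s IH] x /=; first by rewrite subrr.
rewrite -modzDm IH ominus_mod // modzDm.
have -> : ((r y)%:Z - (r x)%:Z + ((r (last y s))%:Z - (r y)%:Z) =
   (r (last y s))%:Z - (r x)%:Z)%R by rewrite addrC addrA subrK.
by [].
Qed.

Lemma delay_rcons (T : finType) (M : nat) (r : T -> nat) x s y :
  delay M r x (rcons s y) = (delay M r x s + ominus M (r y) (r (last x s)))%R.
Proof.
elim: s x => [|z s IH] x /=; first by rewrite add0r addr0.
by rewrite IH addrA.
Qed.

Lemma delay_le_size (T : finType) (M : nat) (r : T -> nat) x s :
  (delay M r x s <= (size s)%:Z)%R.
Proof.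
elim: s x => [|y s IH] x //=.
by rewrite intS; apply: lerD; [apply: ominus_le1 | apply: IH].
Qed.

Lemma modz_neq (M : nat) (a : int) (c : nat) : 0 < c < M ->
  ((a %% M)%Z != ((a + c%:Z) %% M)%Z).
Proof.
case/andP=> c0 cM; apply/negP => /eqP h.
have : (M%:Z %| (a - (a + c%:Z))%R)%Z by rewrite -eqz_mod_dvd; apply/eqP.
rewrite opprD addrA subrr add0r dvdzE /= abszN /=.
move/(dvdn_leq c0); rewrite leqNgt cM //.
Qed.

Lemma modz_dvdM (M d : nat) (x : int) : d %| M ->
  (((x %% M)%Z %% d)%Z = (x %% d)%Z).
Proof.
case/dvdnP=> c ->.
rewrite {2}(divz_eq x (c * d)%N%:Z) PoszM mulrA modzMDl.
by [].
Qed.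

Lemma hS (n : nat) : ((n.+1)%:Z = n%:Z + 1)%R.
Proof. by rewrite intS addrC. Qed.

Section Dyn.
Variables (T : finType) (e : rel T).
Hypotheses (e_sym : symmetric e) (e_conn : forall p q : T, connect e p q).
Variables (rho M : nat).
Hypotheses (M_ge3 : 3 <= M) (delta_dvd_M : rho.+1 %| M).
Variables (S : Type) (op : S -> S -> S).
Hypotheses (opA : associative op) (opC : commutative op) (opI : idempotent_op op).
Variables (v0 : T -> S) (gamma : nat -> config T S) (sel : nat -> {set T}).
Hypotheses (r_range : forall p, cr (gamma 0) p < M)
  (sel_en : forall t p, p \in sel t -> enabled M e (gamma t) p)
  (trans : forall t, gamma t.+1 = step M rho e op v0 (gamma t) (sel t))
  (fair : forall p t, exists2 t', t <= t' & p \in sel t').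
Variable delta0 : T -> T -> int.
Hypothesis delta0_def : forall p q s, path e p s -> last p s = q ->
                  delay M (cr (gamma 0)) p s = delta0 p q.
Variable p0 : T.

Local Notation base := (fun q => ((cr (gamma 0%N) p0)%:Z + delta0 p0 q)%R).
Local Notation L t q := (clift sel base q t).

Lemma M_gt0 : 0 < M. Proof. exact: leq_trans M_ge3. Qed.

Lemma base_mod q : ((((cr (gamma 0%N) p0)%:Z + delta0 p0 q)%R) %% M)%Z = Posz (cr (gamma 0) q).
Proof.
case/connectP: (e_conn p0 q) => s hp hl.
rewrite -(@delta0_def p0 q s hp (esym hl)) -modzDmr delay_mod ?M_gt0 // -hl modzDmr.
have -> : ((cr (gamma 0) p0)%:Z + ((cr (gamma 0) q)%:Z - (cr (gamma 0) p0)%:Z)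
   = (cr (gamma 0) q)%:Z)%R by rewrite addrC subrK.
by rewrite modz_small // ltz_nat r_range.
Qed.

Lemma delta0_edge q q' : e q q' -> (delta0 p0 q' <= delta0 p0 q + 1)%R.
Proof.
move=> hqq'; case/connectP: (e_conn p0 q) => s hp hl.
have hp' : path e p0 (rcons s q') by rewrite rcons_path hp -hl hqq'.
rewrite -(@delta0_def p0 q s hp (esym hl)) -(@delta0_def p0 q' _ hp' (last_rcons _ _ _)).
by rewrite delay_rcons lerD2l ominus_le1.
Qed.

Lemma delta0_le_diam q : (delta0 p0 q <= (diam e)%:Z)%R.
Proof.
have : within e (dist e p0 q) p0 q by rewrite -(dist_leP e_conn).
case/withinP => s [hp hl hs].
rewrite -(@delta0_def p0 q s hp hl).
have h1 := delay_le_size M (cr (gamma 0)) p0 s.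
have h2 : ((size s)%:Z <= (diam e)%:Z)%R.
  by rewrite lez_nat (leq_trans hs) // dist_le_diam.
exact: Order.le_trans h1 h2.
Qed.

Lemma cliftS t q : L t.+1 q = (L t q + (q \in sel t)%:Z)%R.
Proof. by []. Qed.

Lemma clift_mono q t t' : t <= t' -> (L t q <= L t' q)%R.
Proof.
move/subnK <-; elim: (t' - t) => [|m IH] //.
rewrite addSn cliftS.
have h : (L (m + t) q <= L (m + t) q + (q \in sel (m + t))%:Z)%R by rewrite lerDl.
exact: Order.le_trans IH h.
Qed.

Lemma hM1 : 0 < 1 < M. Proof. by rewrite /= (leq_trans _ M_ge3). Qed.
Lemma hM2 : 0 < 2 < M. Proof. by rewrite /= M_ge3. Qed.

Definition Inv t :=
  (forall q, ((L t q) %% M)%Z = Posz (cr (gamma t) q)) /\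
  (forall q q', e q q' -> (L t q' <= L t q + 1)%R).

Lemma sel_nbr t p q : Inv t -> p \in sel t -> e p q ->
  (L t q = L t p \/ L t q = L t p + 1)%R /\
  ((cr (gamma t) q == cr (gamma t) p) = (L t q == L t p)).
Proof.
move=> [I1 I2] hp hpq.
have h1 := I2 _ _ hpq.
have h2 : (L t p <= L t q + 1)%R by apply: I2; rewrite e_sym.
have hen := sel_en hp hpq.
have key : (L t p <= L t q)%R.
  rewrite leNgt; apply/negP => hlt.
  have e1 : L t p = (L t q + 1)%R by apply/le_anti; rewrite h2 lezD1 hlt.
  case: hen => hc.
  - have := @modz_neq M (L t q) 1 hM1.
    by rewrite -e1 !I1 hc eqxx.
  - have := @modz_neq M (L t q) 2 hM2.
    have -> : ((L t q + 2%:Z) %% M)%Z = Posz (cr (gamma t) q).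
      rewrite hc -modz_nat (hS (cr (gamma t) p)) -(I1 p) modzDml e1 -addrA.
      by [].
    by rewrite I1 eqxx.
have hc : (cr (gamma t) q == cr (gamma t) p) = (L t q == L t p).
  apply/idP/idP => /eqP h.
  - move: key; rewrite le_eqVlt => /orP [/eqP -> // | hlt].
    have e1 : L t q = (L t p + 1)%R by apply/le_anti; rewrite h1 lezD1 hlt.
    have := @modz_neq M (L t p) 1 hM1.
    by rewrite -e1 !I1 h eqxx.
  - by rewrite -eqz_nat -!I1 h.
split=> //.
move: key; rewrite le_eqVlt => /orP [/eqP -> | hlt]; first by left.
by right; apply/le_anti; rewrite h1 lezD1 hlt.
Qed.

Lemma Inv0 : Inv 0.
Proof.
split=> [q | q q' hqq'] /=; first exact: base_mod.
by rewrite -addrA lerD2l delta0_edge.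
Qed.

Lemma InvS t : Inv t -> Inv t.+1.
Proof.
move=> hI; have [I1 I2] := hI; split=> [q | q q' hqq'].
- rewrite cliftS trans /=; case: (boolP (q \in sel t)) => hq /=.
  + by rewrite -modz_nat (hS (cr (gamma t) q)) -(I1 q) modzDml.
  + by rewrite addr0 I1.
- rewrite !cliftS.
  case: (boolP (q \in sel t)) => hq; case: (boolP (q' \in sel t)) => hq' /=.
  + by rewrite lerD2r I2.
  + have h := I2 _ _ hqq'.
    have h' : (L t q + 1 <= L t q + 1 + 1)%R by rewrite lerDl.
    rewrite addr0; exact: Order.le_trans h h'.
  + have hq'q : e q' q by rewrite e_sym.
    have [h _] := sel_nbr hI hq' hq'q.
    rewrite addr0 lerD2r; case: h => ->; first by [].
    by rewrite lerDl.
  + by rewrite !addr0 I2.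
Qed.

Lemma Inv_all t : Inv t.
Proof. elim: t => [|t IH]; [exact: Inv0 | exact: InvS]. Qed.

Variable U : int.
Hypothesis U_big : ((cr (gamma 0%N) p0)%:Z + (diam e)%:Z + 1 <= U * (rho.+1)%:Z)%R.

Definition Bset q j := bigset op v0 (ball e q j) (v0 q).

Lemma Bset0 q : Bset q 0 = v0 q.
Proof. by rewrite /Bset (ball0 e_conn) /bigset enum_set1. Qed.

Lemma resid t q : (((cr (gamma t) q %% rho.+1)%N)%:Z = ((L t q) %% (rho.+1)%:Z)%Z)%R.
Proof. have [I1 _] := Inv_all t. by rewrite -modz_nat -I1 modz_dvdM. Qed.

Lemma base_lt q : (L 0 q < U * (rho.+1)%:Z)%R.
Proof.
have h1 : ((cr (gamma 0) p0)%:Z + delta0 p0 q <= (cr (gamma 0) p0)%:Z + (diam e)%:Z)%R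
  by rewrite lerD2l delta0_le_diam.
have h2 : ((cr (gamma 0) p0)%:Z + (diam e)%:Z < U * (rho.+1)%:Z)%R by rewrite -lezD1.
exact: le_lt_trans h1 h2.
Qed.

Definition J t := forall q (j : nat), L t q = (U * (rho.+1)%:Z + j%:Z)%R -> j <= rho ->
   cv1 (gamma t) q = Bset q j.-1 /\ cv2 (gamma t) q = Bset q j.

Lemma J0 : J 0.
Proof.
move=> q j h _; exfalso.
have h1 := base_lt q.
have h3 : (U * (rho.+1)%:Z <= U * (rho.+1)%:Z + j%:Z)%R by rewrite lerDl.
rewrite -h in h3.
by have := lt_le_trans h1 h3; rewrite ltxx.
Qed.

Lemma JS t : J t -> J t.+1.
Proof.
move=> hJ q j; rewrite cliftS trans /=.
case: (boolP (q \in sel t)) => hq /=; last by rewrite addr0; apply: hJ.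
move=> hL hj.
have hres := resid t q.
case: j hL hj => [|j] hL hj.
- have hL1 : (L t q + 1 = U * (rho.+1)%:Z)%R by rewrite -[RHS]addr0; exact: hL.
  have hL' : L t q = ((U - 1) * (rho.+1)%:Z + rho%:Z)%R.
    apply: (addIr 1%R); rewrite hL1 mulrBl mul1r -addrA -hS subrK //.
  have hc : (cr (gamma t) q %% rho.+1 == rho)%N.
    by rewrite -eqz_nat hres hL' modzMDl modz_small ?eqxx // ltz_nat ltnSn.
  by rewrite hc /= Bset0.
- have hL' : L t q = (U * (rho.+1)%:Z + j%:Z)%R.
    apply: (addIr 1%R); rewrite -addrA -hS; exact: hL.
  have hc : (cr (gamma t) q %% rho.+1 == rho)%N = false.
    rewrite -eqz_nat hres hL' modzMDl modz_small ?eqz_nat ?(ltn_eqF hj) //.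
    by rewrite /= ltz_nat ltnS ltnW.
  rewrite hc /=; split; first exact: (hJ q j hL' (ltnW hj)).2.
  apply: (update opA opC opI e_conn) => x hx.
  have [hLx hcx] := sel_nbr (Inv_all t) hq hx.
  rewrite hcx; case: hLx => hLx.
  + rewrite hLx eqxx; apply: (hJ x j _ (ltnW hj)).2; by rewrite hLx.
  + have hlt : (L t q < L t q + 1)%R by rewrite ltzD1.
    rewrite hLx (gt_eqF hlt).
    apply: (hJ x j.+1 _ hj).1; by rewrite hLx hL' (hS j) addrA.
Qed.

Lemma J_all t : J t.
Proof. elim: t => [|t IH]; [exact: J0 | exact: JS]. Qed.

Lemma unbounded p (N : nat) : exists t, (L 0 p + N%:Z <= L t p)%R.
Proof.
elim: N => [|N [t ht]]; first by exists 0; rewrite addr0.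
have [t' htt' hp] := fair p t.
exists t'.+1; rewrite cliftS hp hS addrA.
have h := clift_mono p htt'.
have h2 : (L 0 p + N%:Z <= L t' p)%R := Order.le_trans ht h.
have h3 : (L 0 p + N%:Z + 1 <= L t' p + 1)%R by rewrite lerD2r.
exact: h3.
Qed.

Lemma main_sec (k : nat) (k_le : k <= rho) (p : T) :
  exists t : nat,
    [/\ L t p = (U * (rho.+1)%:Z + k%:Z)%R,
        (forall t', t' < t -> L t' p <> (U * (rho.+1)%:Z + k%:Z)%R),
        cv1 (gamma t) p = bigset op v0 (ball e p k.-1) (v0 p)
      & cv2 (gamma t) p = bigset op v0 (ball e p k) (v0 p)].
Proof.
set K := (U * (rho.+1)%:Z + k%:Z)%R.
have L0lt : (L 0 p < K)%R.
  have h3 : (U * (rho.+1)%:Z <= K)%R by rewrite lerDl.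
  exact: lt_le_trans (base_lt p) h3.
pose P := fun t => (K <= L t p)%R.
have exP : exists t, P t.
  have [t ht] := unbounded p `|K - L 0 p|%N.
  exists t; move: ht; rewrite /P gez0_abs; last by rewrite subr_ge0 ltW.
  have -> : (L 0 p + (K - L 0 p) = K)%R by rewrite addrC subrK.
  by [].
case: (ex_minnP exP) => t ht hmin.
case: t ht hmin => [|s] ht hmin.
  by move: ht; rewrite /P leNgt L0lt.
have hs : (L s p < K)%R.
  rewrite ltNge; apply/negP => h; have := hmin s h; by rewrite ltnn.
have hLs : L s.+1 p = K.
  apply/le_anti; have ht' : (K <= L s.+1 p)%R := ht; rewrite ht' andbT cliftS.
  have h1 : (L s p + (p \in sel s)%:Z <= L s p + 1)%R by rewrite lerD2l lez_nat leq_b1.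
  have h2 : (L s p + 1 <= K)%R by rewrite lezD1.
  exact: Order.le_trans h1 h2.
exists s.+1; split=> //.
- move=> t' ht' hK; have := clift_mono p (ht' : t' <= s); rewrite hK => h.
  by have := le_lt_trans h hs; rewrite ltxx.
- by have [h1 h2] := J_all hLs k_le.
- by have [h1 h2] := J_all hLs k_le.
Qed.

End Dyn.

End Helpers.

Theorem mainTheorem5
  (T : finType) (e : rel T)
  (e_sym : symmetric e) (e_irr : irreflexive e)
  (e_conn : forall p q : T, connect e p q)
  (n_ge2 : 2 <= #|T|)
  (rho M : nat) (rho_ge1 : 1 <= rho) (M_ge3 : 3 <= M) (delta_dvd_M : rho.+1 %| M)
  (S : Type) (op : S -> S -> S)
  (opA : associative op) (opC : commutative op) (opI : idempotent_op op)
  (v0 : T -> S)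
  (gamma : nat -> config T S) (sel : nat -> {set T})
  (r_range : forall p, cr (gamma 0) p < M)
  (sel_ne : forall t, sel t != set0)
  (sel_en : forall t p, p \in sel t -> enabled M e (gamma t) p)
  (trans : forall t, gamma t.+1 = step M rho e op v0 (gamma t) (sel t))
  (fair : forall p t, exists2 t', t <= t' & p \in sel t')
  (* WU_0 in gamma_0, with delta0 p q the common delay of all paths p ~> q *)
  (wu0 : WU M e (cr (gamma 0)))
  (delta0 : T -> T -> int)
  (delta0_def : forall p q s, path e p s -> last p s = q ->
                  delay M (cr (gamma 0)) p s = delta0 p q)
  (p0 : T) (p0_min : forall q, (0 <= delta0 p0 q)%R)
  (U : int) (k : nat) (k_ge1 : 1 <= k) (k_le : k <= rho)
  (U_big : ((cr (gamma 0%N) p0)%:Z + (diam e)%:Z + 1 <= U * (rho.+1)%:Z)%R)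
  (p : T) :
  let base := fun q => ((cr (gamma 0%N) p0)%:Z + delta0 p0 q)%R in
  let K := (U * (rho.+1)%:Z + k%:Z)%R in
  exists t : nat,
    [/\ clift sel base p t = K,
        (forall t', t' < t -> clift sel base p t' <> K),
        cv1 (gamma t) p = bigset op v0 (ball e p k.-1) (v0 p)
      & cv2 (gamma t) p = bigset op v0 (ball e p k) (v0 p)].

Proof.
move=> base K.
exact: (Helpers.main_sec e_sym e_conn M_ge3 delta_dvd_M opA opC opI r_range
  sel_en trans fair delta0_def U_big k_le p).
Qed.
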